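(* Let $N\ge1$ and let $\{a_n\}_{n=0}^{N-1},\{b_n\}_{n=0}^{N-1},\{c_n\}_{n=1}^{N}$ be real sequences with $c_n>0$, $a_{N-1}=0$, $b_{N-1}=\tfrac12$, $c_N=1$, satisfying for $n=1,\dots,N-1$ $$a_{n-1}=a_n\Big(\frac{1}{c_n^2+1}\Big)^{1/2}+b_n\Big(\frac{1}{c_n^2+1}\Big)^{3/2}c_n^2,\quad b_{n-1}=b_n\Big(\frac{1}{c_n^2+1}\Big)^{3/2}+\frac{c_n}{c_n^2+1},\quad a_n+b_n=\frac{1-c_n^2}{c_n(1+c_n^2)^{1/2}}.$$ Then for each $n\in\{2,\dots,N\}$, $c_{n-1}$ is the unique root in $(0,1)$ of the equation in $x$ $$(1-x^2)\,c_n(1+c_n^2)=x(1+x^2)^{1/2},$$ and $c_N>c_{N-1}>\cdots>c_2>c_1$.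
   Context: These sequences describe the equilibrium of the risk-neutral insider model (Model 2) of an $N$-period Kyle-type insider trading model, in which the insider's trading intensity in period $n$ is $c_n\sigma_u\Delta t_N^{1/2}\Sigma_{n-1}^{-1/2}$; the claim concerns only the sequences as defined here. *)

(* Defs.v *)
From Stdlib Require Export Reals.
Open Scope R_scope.

Definition model2_rel (a b c : nat -> R) (n : nat) : Prop :=
  a (n - 1)%nat = a n * Rpower (/ (c n ^ 2 + 1)) (1/2)
                  + b n * Rpower (/ (c n ^ 2 + 1)) (3/2) * c n ^ 2 /\
  b (n - 1)%nat = b n * Rpower (/ (c n ^ 2 + 1)) (3/2) + c n / (c n ^ 2 + 1) /\
  a n + b n = (1 - c n ^ 2) / (c n * Rpower (1 + c n ^ 2) (1/2)).

Definition root_eq (cn x : R) : Prop :=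
  (1 - x ^ 2) * cn * (1 + cn ^ 2) = x * Rpower (1 + x ^ 2) (1/2).

(* Main.v *)
Require Import Defs.
From Stdlib Require Import Reals Lra Lia Psatz.
Open Scope R_scope.

Lemma rp_half y : 0 < y -> Rpower y (1/2) = sqrt y.
Proof. intros H. replace (1/2) with (/2) by field. now apply Rpower_sqrt. Qed.

Lemma rp_32 y : 0 < y -> Rpower y (3/2) = y * sqrt y.
Proof.
  intros H. replace (3/2) with (1 + 1/2) by field.
  rewrite Rpower_plus, Rpower_1, rp_half; auto.
Qed.

Lemma sum_rel (a b c : nat -> R) n : 0 < c n -> model2_rel a b c n ->
  a n + b n = (1 - c n ^ 2) / (c n * sqrt (1 + c n ^ 2)) /\
  a (n-1)%nat + b (n-1)%nat = 1 / (c n * (1 + c n ^ 2)).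
Proof.
  intros Hc [H1 [H2 H3]].
  set (x := c n) in *.
  assert (Hp : 0 < x ^ 2 + 1) by nra.
  assert (Hp' : 0 < / (x ^ 2 + 1)) by (apply Rinv_0_lt_compat; lra).
  rewrite rp_half in H1 by exact Hp'. rewrite rp_32 in H1, H2 by exact Hp'.
  rewrite rp_half in H3 by nra.
  rewrite sqrt_inv in H1, H2.
  replace (x^2+1) with (1+x^2) in H1, H2 by ring.
  set (r := sqrt (1 + x^2)) in *.
  assert (Hr2 : r * r = 1 + x^2) by (apply sqrt_sqrt; nra).
  assert (Hr : 0 < r) by (apply sqrt_lt_R0; nra).
  split; [exact H3|].
  rewrite H1, H2.
  assert (E : a n * / r + b n * (/ (1 + x ^ 2) * / r) * x ^ 2 +
     (b n * (/ (1 + x ^ 2) * / r) + x / (1 + x ^ 2))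
     = (a n + b n) / r + x / (1 + x^2)) by (field; nra).
  rewrite E, H3.
  replace ((1 - x ^ 2) / (x * r) / r) with ((1 - x^2) / (x * (r*r))) by (field; lra).
  rewrite Hr2. field; nra.
Qed.

Lemma root_unique K x y : 0 < K -> 0 < x < 1 -> 0 < y < 1 ->
  (1 - x^2) * K = x * sqrt (1 + x^2) -> (1 - y^2) * K = y * sqrt (1 + y^2) -> x = y.
Proof.
  intros HK Hx Hy E1 E2.
  destruct (Rtotal_order x y) as [Hl|[He|Hl]]; auto; exfalso.
  - assert (sqrt (1+x^2) < sqrt (1+y^2)) by (apply sqrt_lt_1; nra).
    assert (0 < sqrt (1+x^2)) by (apply sqrt_lt_R0; nra).
    assert (x * sqrt (1+x^2) < y * sqrt (1+y^2)) by
      (apply Rle_lt_trans with (y * sqrt (1+x^2)); nra).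
    assert ((1 - y^2) * K < (1 - x^2) * K) by (apply Rmult_lt_compat_r; nra).
    lra.
  - assert (sqrt (1+y^2) < sqrt (1+x^2)) by (apply sqrt_lt_1; nra).
    assert (0 < sqrt (1+y^2)) by (apply sqrt_lt_R0; nra).
    assert (y * sqrt (1+y^2) < x * sqrt (1+x^2)) by
      (apply Rle_lt_trans with (x * sqrt (1+y^2)); nra).
    assert ((1 - x^2) * K < (1 - y^2) * K) by (apply Rmult_lt_compat_r; nra).
    lra.
Qed.

Theorem proposition4 (N : nat) (a b c : nat -> R) :
  (1 <= N)%nat ->
  (forall n, (1 <= n <= N)%nat -> 0 < c n) ->
  a (N - 1)%nat = 0 ->
  b (N - 1)%nat = 1 / 2 ->
  c N = 1 ->
  (forall n, (1 <= n <= N - 1)%nat -> model2_rel a b c n) ->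
  (forall n, (2 <= n <= N)%nat ->
     (0 < c (n - 1)%nat < 1 /\ root_eq (c n) (c (n - 1)%nat) /\
      forall x, 0 < x < 1 -> root_eq (c n) x -> x = c (n - 1)%nat)) /\
  (forall n, (2 <= n <= N)%nat -> c (n - 1)%nat < c n).
Proof.
  intros HN Hpos Ha Hb HcN Hrel.
  assert (S1 : forall n, (2 <= n <= N)%nat ->
     a (n-1)%nat + b (n-1)%nat = 1 / (c n * (1 + c n ^ 2))).
  { intros n Hn. destruct (Nat.eq_dec n N) as [->|Hne].
    - rewrite Ha, Hb, HcN. field.
    - apply (sum_rel a b c n); [apply Hpos; lia| apply Hrel; lia]. }
  assert (S2 : forall n, (2 <= n <= N)%nat ->
     a (n-1)%nat + b (n-1)%nat = (1 - c (n-1)%nat ^ 2) /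
        (c (n-1)%nat * sqrt (1 + c (n-1)%nat ^ 2))).
  { intros n Hn. apply (sum_rel a b c (n-1)); [apply Hpos; lia| apply Hrel; lia]. }
  assert (R1 : forall n, (2 <= n <= N)%nat ->
     0 < c (n-1)%nat < 1 /\
     (1 - c (n-1)%nat ^ 2) * (c n * (1 + c n ^ 2)) =
       c (n-1)%nat * sqrt (1 + c (n-1)%nat ^ 2)).
  { intros n Hn. pose proof (S1 n Hn) as E1. rewrite (S2 n Hn) in E1.
    assert (Hx : 0 < c (n-1)%nat) by (apply Hpos; lia).
    assert (Hc : 0 < c n) by (apply Hpos; lia).
    set (x := c (n-1)%nat) in *. set (y := c n) in *.
    assert (Hr : 0 < sqrt (1 + x^2)) by (apply sqrt_lt_R0; nra).
    set (r := sqrt (1 + x^2)) in *.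
    assert (HK : 0 < y * (1 + y^2)) by nra.
    assert (E : (1 - x ^ 2) * (y * (1 + y ^ 2)) = x * r).
    { assert (x <> 0) by lra. assert (r <> 0) by lra. assert (y * (1 + y^2) <> 0) by lra.
      replace (1 - x^2) with (((1 - x^2) / (x * r)) * (x * r)) by (field; auto).
      rewrite E1. field. repeat split; auto; nra. }
    split; [|exact E]. split; [exact Hx|].
    assert (0 < x * r) by nra.
    assert (P : 0 < (1 - x^2) * (y * (1 + y^2))) by lra.
    assert (0 < 1 - x^2).
    { destruct (Rle_lt_dec (1 - x^2) 0) as [h|h]; auto.
      assert ((1 - x^2) * (y * (1 + y^2)) <= 0) by nra. lra. }
    nra. }
  assert (RE : forall n x, (2 <= n)%nat -> 0 < x ->
     root_eq (c n) x <-> (1 - x^2) * (c n * (1 + c n ^ 2)) = x * sqrt (1 + x^2)).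
  { intros n x Hn Hx. unfold root_eq. rewrite rp_half by nra.
    split; intro E; rewrite <- E; ring. }
  split.
  - intros n Hn. destruct (R1 n Hn) as [Hb1 E].
    split; [exact Hb1|]. split.
    + apply RE; [lia|lra|]. exact E.
    + intros x Hx Ex. apply RE in Ex; [|lia|lra].
      apply (root_unique (c n * (1 + c n ^ 2))); auto.
      assert (0 < c n) by (apply Hpos; lia). nra.
  - assert (IND : forall k n, n = (N - k)%nat -> (2 <= n <= N)%nat -> c (n-1)%nat < c n).
    { induction k as [|k IH]; intros n -> Hn.
      - replace (N - 0)%nat with N by lia. rewrite HcN. apply (R1 N). lia.
      - pose proof (IH (N - k)%nat eq_refl ltac:(lia)) as Hlt.
        replace (N - k - 1)%nat with (N - S k)%nat in Hlt by lia.
        replace (N - k)%nat with (S (N - S k)) in Hlt by lia.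
        set (m := (N - S k)%nat) in *.
        destruct (R1 m ltac:(lia)) as [Hm E1].
        destruct (R1 (S m) ltac:(lia)) as [Hm' E2].
        replace (S m - 1)%nat with m in Hm', E2 by lia.
        destruct (Rlt_le_dec (c (m-1)%nat) (c m)) as [H|H]; auto. exfalso.
        set (x := c (m-1)%nat) in *. set (y := c m) in *. set (z := c (S m)) in *.
        assert (sqrt (1 + y^2) <= sqrt (1 + x^2)) by (apply sqrt_le_1; nra).
        assert (0 < sqrt (1+y^2)) by (apply sqrt_lt_R0; nra).
        assert (y * y < z * z) by nra.
        assert (y * y * y < z * z * z) by nra.
        assert (y * (1 + y^2) < z * (1 + z^2)) 
          by (replace (y * (1 + y^2)) with (y + y*y*y) by ring;
              replace (z * (1 + z^2)) with (z + z*z*z) by ring; lra).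
        assert (0 < y * (1 + y^2)) by nra.
        assert (0 < 1 - x^2) by nra.
        assert (1 - x^2 <= 1 - y^2) by nra.
        assert ((1 - x^2) * (y * (1 + y^2)) < (1 - x^2) * (z * (1 + z^2)))
          by (apply Rmult_lt_compat_l; lra).
        assert ((1 - x^2) * (z * (1 + z^2)) <= (1 - y^2) * (z * (1 + z^2)))
          by (apply Rmult_le_compat_r; lra).
        assert (y * sqrt (1 + y^2) <= x * sqrt (1 + x^2)) by
          (apply Rle_trans with (x * sqrt (1+y^2)); nra).
        lra. }
    intros n Hn. apply (IND (N - n)%nat); lia.
Qed.
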